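(* A ring $R$ is NJ-symmetric if and only if the corner ring $eRe$ is NJ-symmetric for every idempotent $e\in R$.
   Context: Rings are associative with identity ($eRe$ has identity $e$). $N(R)$ is the set of nilpotent elements, $J(R)$ the Jacobson radical. $R$ is NJ-symmetric if for all $a,b,c\in R$, $abc\in N(R)$ implies $bac\in J(R)$. *)

(* Defs.v *)
From HB Require Import structures.
From mathcomp Require Import all_boot all_order all_algebra.
Set Implicit Arguments. Unset Strict Implicit. Unset Printing Implicit Defensive.
Import GRing.Theory.
Local Open Scope ring_scope.

Definition nilpotent_elt (R : pzRingType) (x : R) : Prop :=
  exists n : nat, x ^+ n = 0.

Definition left_ideal (R : pzRingType) (I : R -> Prop) : Prop :=
  [/\ I 0,
      (forall x y, I x -> I y -> I (x + y)) &
      (forall r x, I x -> I (r * x))].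

Definition maximal_left_ideal (R : pzRingType) (M : R -> Prop) : Prop :=
  [/\ left_ideal M, ~ M 1 &
      forall I : R -> Prop, left_ideal I -> ~ I 1 ->
        (forall x, M x -> I x) -> forall x, I x -> M x].

(* J(R): the Jacobson radical, the intersection of all maximal left ideals
   (J(R) = R when R has no maximal left ideal, i.e. R = 0). *)
Definition jacobson (R : pzRingType) (x : R) : Prop :=
  forall M : R -> Prop, maximal_left_ideal M -> M x.

Definition NJ_symmetric (R : pzRingType) : Prop :=
  forall a b c : R, nilpotent_elt (a * b * c) -> jacobson (b * a * c).

Section Corner.
Variables (R : pzRingType) (e : R) (he : e * e = e).

Record corner_raw := Corner { cval : R; cvalP : e * cval * e == cval }.

HB.instance Definition _ := [isSub for cval].
HB.instance Definition _ := [Choice of corner_raw by <:].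

(* The carrier of eRe; it is indexed by the idempotence proof [he] so that
   the ring structure (which needs it) can be attached canonically. *)
Definition corner (_ : e * e = e) : Type := corner_raw.
HB.instance Definition _ := Choice.on (corner he).

Lemma corner_left (x : corner_raw) : e * cval x = cval x.
Proof. by rewrite -(eqP (cvalP x)) !mulrA he. Qed.
Lemma corner_right (x : corner_raw) : cval x * e = cval x.
Proof. by rewrite -(eqP (cvalP x)) -!mulrA he. Qed.

Lemma corner0_subproof : e * 0 * e == 0 :> R.
Proof. by rewrite mulr0 mul0r. Qed.
Definition czero : corner he := Corner corner0_subproof.

Lemma cornerD_subproof (x y : corner_raw) :
  e * (cval x + cval y) * e == cval x + cval y.
Proof. by rewrite mulrDr mulrDl (eqP (cvalP x)) (eqP (cvalP y)). Qed.
Definition cadd (x y : corner he) : corner he := Corner (cornerD_subproof x y).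

Lemma cornerN_subproof (x : corner_raw) : e * (- cval x) * e == - cval x.
Proof. by rewrite mulrN mulNr (eqP (cvalP x)). Qed.
Definition copp (x : corner he) : corner he := Corner (cornerN_subproof x).

Lemma corner1_subproof : e * e * e == e.
Proof. by rewrite !he. Qed.
Definition cone : corner he := Corner corner1_subproof.

Lemma cornerM_subproof (x y : corner_raw) :
  e * (cval x * cval y) * e == cval x * cval y.
Proof. by rewrite mulrA corner_left -mulrA corner_right. Qed.
Definition cmul (x y : corner he) : corner he := Corner (cornerM_subproof x y).

Lemma caddA : associative cadd.
Proof. by move=> x y z; apply: val_inj; rewrite /= addrA. Qed.
Lemma caddC : commutative cadd.
Proof. by move=> x y; apply: val_inj; rewrite /= addrC. Qed.
Lemma cadd0 : left_id czero cadd.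
Proof. by move=> x; apply: val_inj; rewrite /= add0r. Qed.
Lemma caddN : left_inverse czero copp cadd.
Proof. by move=> x; apply: val_inj; rewrite /= addNr. Qed.

HB.instance Definition _ := GRing.isZmodule.Build (corner he) caddA caddC cadd0 caddN.

Lemma cmulA : associative cmul.
Proof. by move=> x y z; apply: val_inj; rewrite /= mulrA. Qed.
Lemma cmul1 : left_id cone cmul.
Proof. by move=> x; apply: val_inj; rewrite /= corner_left. Qed.
Lemma cmulr1 : right_id cone cmul.
Proof. by move=> x; apply: val_inj; rewrite /= corner_right. Qed.
Lemma cmulDl : left_distributive cmul cadd.
Proof. by move=> x y z; apply: val_inj; rewrite /= mulrDl. Qed.
Lemma cmulDr : right_distributive cmul cadd.
Proof. by move=> x y z; apply: val_inj; rewrite /= mulrDr. Qed.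

HB.instance Definition _ :=
  GRing.Zmodule_isPzRing.Build (corner he) cmulA cmul1 cmulr1 cmulDl cmulDr.

End Corner.

(* Main.v *)
Require Import Defs.
From HB Require Import structures.
From mathcomp Require Import all_boot all_order all_algebra.
From Stdlib Require Import Classical.
Import GRing.Theory.
Local Open Scope ring_scope.

Lemma conj3 (A B C : Prop) : A -> B -> C -> [/\ A, B & C].
Proof. by []. Qed.

Section Aux.
Variables (R : pzRingType) (e : R) (he : e * e = e).

Lemma cproj_subproof (x : R) : e * (e * x * e) * e == e * x * e.
Proof. by rewrite !mulrA he -!mulrA he. Qed.
Definition cproj (x : R) : corner he := Corner (cproj_subproof x).

Lemma cvalM (x y : corner he) : cval (x * y) = cval x * cval y.
Proof. by []. Qed.
Lemma cvalD (x y : corner he) : cval (x + y) = cval x + cval y.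
Proof. by []. Qed.
Lemma cval0 : cval (0 : corner he) = 0. Proof. by []. Qed.
Lemma cval1 : cval (1 : corner he) = e. Proof. by []. Qed.
Lemma cvalX (x : corner he) n : cval (x ^+ n.+1) = cval x ^+ n.+1.
Proof. elim: n => [//|n IH]. by rewrite exprS cvalM IH -exprS. Qed.
Lemma cval_inj (x y : corner he) : cval x = cval y -> x = y.
Proof. exact: val_inj. Qed.
Lemma cvalE (x : corner he) : e * cval x * e = cval x.
Proof. exact: (eqP (cvalP x)). Qed.

Lemma M_sub (M : corner he -> Prop) : left_ideal M -> forall x y, M x -> M y -> M (x - y).
Proof.
case=> _ hD hM x y hx hy; apply: hD => //.
by rewrite -mulN1r; apply: hM.
Qed.

Lemma RM_sub (M : R -> Prop) : left_ideal M -> forall x y, M x -> M y -> M (x - y).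
Proof.
case=> _ hD hM x y hx hy; apply: hD => //.
by rewrite -mulN1r; apply: hM.
Qed.

Lemma jac_corner (y : R) : e * y * e = y -> jacobson y ->
  forall M : corner he -> Prop, maximal_left_ideal M -> M (cproj y).
Proof.
move=> hy hJ M [[M0 MD MM] M1 Mmax].
pose N (x : R) := forall r, M (cproj (r * x)).
have cp0 : forall x, e * x * e = 0 -> cproj x = 0.
  by move=> x hx; apply: cval_inj.
have N1e : N (1 - e).
  move=> r; rewrite cp0 //.
  by rewrite mulrBr mulr1 mulrBr mulrBl -!mulrA he subrr.
have hN : maximal_left_ideal N.
  split.
  - split.
    + by move=> r; rewrite cp0 // !mulr0 mul0r.
    + move=> x z hx hz r.
      have -> : cproj (r * (x + z)) = cproj (r * x) + cproj (r * z).
        by apply: cval_inj; rewrite /= mulrDr mulrDr mulrDl.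
      by apply: MD.
    + move=> s x hx r; rewrite mulrA; exact: hx.
  - move=> h; apply: M1; have := h 1; rewrite mul1r.
    have -> : cproj 1 = 1 by apply: cval_inj; rewrite /= mulr1 he.
    done.
  - move=> I [I0 ID IM] I1 NI x Ix r.
    apply: NNPP => hr.
    pose I' (z : corner he) := I (cval z).
    have hI' : left_ideal I'.
      split => //.
      + by move=> u v hu hv; apply: ID.
      + by move=> u v hv; apply: IM.
    have I'1 : ~ I' 1.
      move=> hIe; apply: I1.
      have -> : (1 : R) = e + (1 - e) by rewrite addrC subrK.
      by apply: ID => //; apply: NI.
    have MI' : forall z, M z -> I' z.
      move=> z hz; apply: NI => r'.
      have -> : cproj (r' * cval z) = cproj r' * z.
        by apply: cval_inj; rewrite /= -!mulrA (corner_right he) (corner_left he).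
      by apply: MM.
    apply: hr; apply: (Mmax I' hI' I'1 MI').
    rewrite /I' /=.
    have -> : e * (r * x) * e = e * r * x - e * r * x * (1 - e).
      by rewrite mulrBr mulr1 opprB addrC subrK !mulrA.
    apply: (@RM_sub I (And3 I0 ID IM)).
    + by rewrite -mulrA; exact: (IM _ _ (IM _ _ Ix)).
    + apply: NI => s; rewrite cp0 //.
      by rewrite -!mulrA mulrBl mul1r he subrr !mulr0.
by have := hJ N hN 1; rewrite mul1r.
Qed.

End Aux.
Arguments cproj {R e} he x.
Arguments jac_corner {R e} he y _ _ M _.
Arguments cval_inj {R e he} x y _.
Arguments cvalE {R e} he x.
Arguments cvalX {R e he} x n.


Lemma max_corner1 (R : pzRingType) (M : R -> Prop) :
  maximal_left_ideal M ->
  maximal_left_ideal (fun z : corner (mulr1 (1 : R)) => M (cval z)).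
Proof.
move=> [[M0 MD MM] M1 Mmax]; split.
- split => //.
  + by move=> u v hu hv; apply: MD.
  + by move=> u v hv; apply: MM.
- done.
- move=> I' [I0 ID IM] I1 MI z Iz.
  pose I (x : R) := I' (cproj (mulr1 (1 : R)) x).
  have cpE : forall x : R, cval (cproj (mulr1 (1 : R)) x) = x.
    by move=> x /=; rewrite mulr1 mul1r.
  have hI : left_ideal I.
    split.
    + rewrite /I; have -> : cproj (mulr1 (1 : R)) 0 = 0 by apply: cval_inj; rewrite cpE.
      done.
    + move=> x y hx hy; rewrite /I.
      have -> : cproj (mulr1 (1 : R)) (x + y) =
                cproj (mulr1 (1 : R)) x + cproj (mulr1 (1 : R)) y.
        by apply: cval_inj; rewrite cvalD !cpE.
      exact: ID.
    + move=> r x hx; rewrite /I.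
      have -> : cproj (mulr1 (1 : R)) (r * x) =
                cproj (mulr1 (1 : R)) r * cproj (mulr1 (1 : R)) x.
        by apply: cval_inj; rewrite cvalM !cpE.
      exact: IM.
  have I1' : ~ I 1.
    rewrite /I.
    have -> : cproj (mulr1 (1 : R)) 1 = 1 by apply: cval_inj; rewrite cpE.
    done.
  have MIR : forall x, M x -> I x.
    by move=> x hx; apply: MI; rewrite cpE.
  have := Mmax I hI I1' MIR (cval z).
  rewrite /I; have -> : cproj (mulr1 (1 : R)) (cval z) = z by apply: cval_inj; rewrite cpE.
  by apply.
Qed.

Theorem proposition2p19 (R : pzRingType) :
  NJ_symmetric R <->
  (forall (e : R) (he : e * e = e), NJ_symmetric (@corner R e he)).
Proof.
split.
- move=> hR e he a b c [n hn].
  have hnil : nilpotent_elt (cval a * cval b * cval c).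
    case: n hn => [|m] hn.
    + exists 1%N; rewrite expr1.
      have e0 : e = 0 by have := congr1 (@cval _ e) hn; rewrite expr0.
      have h := congr1 (fun t => t * cval a) e0; rewrite /= mul0r (corner_left he a) in h.
      by rewrite h !mul0r.
    + exists m.+1; have := congr1 (@cval _ e) hn; rewrite cvalX.
      by [].
  have hJ := hR _ _ _ hnil.
  move=> M hM.
  have hy : e * (cval b * cval a * cval c) * e = cval b * cval a * cval c.
    exact: (cvalE he (b * a * c)).
  have := jac_corner he _ hy hJ M hM.
  have -> : cproj he (cval b * cval a * cval c) = b * a * c.
    by apply: cval_inj; rewrite /= hy.
  done.
- move=> hC a b c [n hn] M hM.
  pose he := mulr1 (1 : R).
  have cpE : forall x : R, cval (cproj he x) = x.
    by move=> x /=; rewrite mulr1 mul1r.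
  case: n hn => [|m] hn.
    by case: hM => [[M0 _ _] M1 _]; exfalso; apply: M1; rewrite -(expr0 (a * b * c)) hn.
  have hnil : nilpotent_elt (cproj he a * cproj he b * cproj he c).
    exists m.+1; apply: cval_inj; rewrite cvalX !cvalM !cpE; exact: hn.
  have := hC 1 he _ _ _ hnil _ (max_corner1 _ _ hM).
  by rewrite !cvalM !cpE.
Qed.
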